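(* Let $s\ge 1$, $q=4^{2s}$, and let $\theta$ be the automorphism of $F_q$ given by $\theta(a)=a^{4^s}$. Let $n$ be an even positive integer and let $C$ be a skew cyclic code of length $n$ over $F_q$ with respect to $\theta$. If $C$ is a reversible DNA code, then so is its dual code $C^\perp$.
   Context: $F_q[x;\theta]$ is the skew polynomial ring with multiplication determined by $xa=\theta(a)x$. A skew cyclic code of length $n$ is a linear code $C\subseteq F_q^n$ such that $(\theta(c_{n-1}),\theta(c_0),\ldots,\theta(c_{n-2}))\in C$ whenever $(c_0,\ldots,c_{n-1})\in C$. $C^\perp$ is the dual with respect to the standard inner product $\sum_i u_iv_i$ on $F_q^n$. DNA correspondence: there is a fixed bijection $\tau:F_{4^{2s}}\to\{A,T,G,C\}^{2s}$ such that for every $\beta$, $\tau(\beta^{4^s})$ is the reverse of the string $\tau(\beta)$; it extends to $\phi:F_q^n\to\{A,T,G,C\}^{2sn}$ by concatenation, $\phi(c_0,\ldots,c_{n-1})=(\tau(c_0),\ldots,\tau(c_{n-1}))$. A code $C\subseteq F_q^n$ is a reversible DNA code if the reverse string $\phi(c)^r$ lies in $\phi(C)$ for all $c\in C$; equivalently, $(\theta(c_{n-1}),\ldots,\theta(c_1),\theta(c_0))\in C$ for every $(c_0,\ldots,c_{n-1})\in C$. *)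

(* Defs.v *)
From HB Require Import structures.
From mathcomp Require Import all_boot all_order all_algebra all_field.
Set Implicit Arguments. Unset Strict Implicit. Unset Printing Implicit Defensive.
Import GRing.Theory.
Local Open Scope ring_scope.

Inductive nucleotide := NA | NT | NG | NC.
Definition nuc_code (x : nucleotide) : nat :=
  match x with NA => 0 | NT => 1 | NG => 2 | NC => 3 end%N.
Definition nuc_decode (k : nat) : nucleotide :=
  match k with 0 => NA | 1 => NT | 2 => NG | _ => NC end%N.
Lemma nuc_codeK : cancel nuc_code nuc_decode. Proof. by case. Qed.
HB.instance Definition _ := Equality.copy nucleotide (can_type nuc_codeK).

Section Codes.
Variables (F : fieldType) (n : nat).

(* theta applied to a vector / skew cyclic shift:
   (c_0,...,c_{n-1}) |-> (theta c_{n-1}, theta c_0, ..., theta c_{n-2}) *)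
Definition skew_shift (theta : F -> F) (c : 'rV[F]_n) : 'rV[F]_n :=
  \row_(i < n) theta (c 0 (ord_pred i)).

Definition skew_reverse (theta : F -> F) (c : 'rV[F]_n) : 'rV[F]_n :=
  \row_(i < n) theta (c 0 (rev_ord i)).

Definition skew_cyclic (theta : F -> F) (C : {vspace 'rV[F]_n}) : Prop :=
  forall c, c \in C -> skew_shift theta c \in C.

Definition dual_code (C : {vspace 'rV[F]_n}) : 'rV[F]_n -> Prop :=
  fun v => forall c : 'rV[F]_n, c \in C -> \sum_(i < n) c 0 i * v 0 i = 0.

Definition dna_phi (tau : F -> seq nucleotide) (c : 'rV[F]_n) : seq nucleotide :=
  flatten [seq tau (c 0 i) | i <- enum 'I_n].

Definition reversible_DNA (tau : F -> seq nucleotide) (C : 'rV[F]_n -> Prop) : Prop :=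
  forall c, C c -> exists2 d, C d & dna_phi tau d = rev (dna_phi tau c).

End Codes.

Definition DNA_correspondence (F : fieldType) (s : nat) (tau : F -> seq nucleotide) : Prop :=
  [/\ forall b, size (tau b) = (2 * s)%N,
      injective tau,
      forall w : seq nucleotide, size w = (2 * s)%N -> exists b, tau b = w
    & forall b, tau (b ^+ (4 ^ s)) = rev (tau b)].

(* Main.v *)
Require Import Defs.
From HB Require Import structures.
From mathcomp Require Import all_boot all_order all_algebra all_field zify.
Local Open Scope ring_scope.
Import GRing.Theory.

Lemma rev_enum_ord n : rev (enum 'I_n) = map (@rev_ord n) (enum 'I_n).
Proof.
apply: (inj_map val_inj); rewrite map_rev val_enum_ord -map_comp.
apply: (@eq_from_nth _ 0%N).
  by rewrite size_rev size_iota size_map size_enum_ord.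
rewrite size_rev size_iota => m Hm.
rewrite nth_rev ?size_iota // (nth_map (Ordinal Hm)) ?size_enum_ord // !nth_iota; last by lia.
by rewrite /= nth_enum_ord.
Qed.

Lemma dna_phi_rev (F : fieldType) (n : nat) (tau : F -> seq nucleotide) (theta : F -> F) (c : 'rV[F]_n) :
  (forall b, tau (theta b) = rev (tau b)) ->
  dna_phi tau (skew_reverse theta c) = rev (dna_phi tau c) :> seq nucleotide.
Proof.
move=> Ht; rewrite /dna_phi rev_flatten -map_rev -(map_rev (fun i => tau (c 0 i))) rev_enum_ord -!map_comp.
congr flatten; apply: eq_map => i /=; by rewrite mxE Ht.
Qed.

Lemma dna_phi_inj (F : fieldType) n s (tau : F -> seq nucleotide) :
  (forall b, size (tau b) = s) -> injective tau -> injective (@dna_phi F n tau).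
Proof.
move=> Hs Hi c d E.
have Sh : forall e : 'rV[F]_n, shape [seq tau (e 0 i) | i <- enum 'I_n] = nseq n s.
  move=> e; apply: (@eq_from_nth _ 0%N); first by rewrite /shape -map_comp size_map size_nseq size_enum_ord.
  rewrite /shape -map_comp size_map size_enum_ord => m Hm.
  rewrite nth_nseq Hm (nth_map (Ordinal Hm)) ?size_enum_ord /= ?Hs //.
have := flattenK [seq tau (c 0 i) | i <- enum 'I_n].
have := flattenK [seq tau (d 0 i) | i <- enum 'I_n].
rewrite !Sh; move: E; rewrite /dna_phi => -> -> Hcd.
have H2 : map (d 0) (enum 'I_n) = map (c 0) (enum 'I_n).
  apply: (inj_map Hi); rewrite -(map_comp tau (d 0)) -(map_comp tau (c 0)); exact: Hcd.
move: H2; move/eq_in_map => H; apply/rowP => j.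
by rewrite H // mem_enum.
Qed.

Theorem corollary2 (s : nat) (F : finFieldType) (n : nat)
    (tau : F -> seq nucleotide) (C : {vspace 'rV[F]_n}) :
  (1 <= s)%N ->
  #|F| = (4 ^ (2 * s))%N ->
  DNA_correspondence s tau ->
  (0 < n)%N -> ~~ odd n ->
  skew_cyclic (fun a : F => a ^+ (4 ^ s)) C ->
  reversible_DNA tau (fun v => v \in C) ->
  reversible_DNA tau (dual_code C).
Proof.
move=> Hs HF [Hsz Hinj _ Hrev] _ _ _ HCdna.
set theta := fun a : F => a ^+ (4 ^ s).
have E4 : (4 ^ s = 2 ^ (2 * s))%N by rewrite expnM.
have ch2 : (2 \in [pchar F])%N.
  apply: (@card_finPcharP F 2 (4 * s)) => //.
  by rewrite HF -[4%N]/(2 ^ 2)%N -expnM mulnA.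
have thD : {morph theta : x y / x + y}.
  have Hn : (GRing.pchar F).-nat (4 ^ s)%N by rewrite E4 pnatX pnatE // ch2.
  by move=> x y; rewrite /theta exprDn_pchar.
have th0 : theta 0 = 0 by rewrite /theta expr0n expn_eq0.
have thM : forall x y, theta (x * y) = theta x * theta y by move=> x y; rewrite /theta exprMn.
have thK : forall x, theta (theta x) = x.
  by move=> x; rewrite /theta -exprM -expnD addnn -mul2n -HF expf_card.
have HC : forall c, c \in C -> skew_reverse theta c \in C.
  move=> c Hc; have [d Hd Ed] := HCdna c Hc.
  rewrite -(@dna_phi_rev F n tau theta c Hrev) in Ed.
  by rewrite -(@dna_phi_inj F n _ tau Hsz Hinj _ _ Ed).
move=> v Hv; exists (skew_reverse theta v); last exact: dna_phi_rev.
move=> c Hc; have H := Hv _ (HC c Hc).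
transitivity (theta (\sum_(i < n) skew_reverse theta c 0 i * v 0 i)); last by rewrite H th0.
rewrite (big_morph theta thD th0) (reindex_inj rev_ord_inj) /=.
apply: eq_bigr => i _; rewrite !mxE thM thK rev_ordK //.
Qed.
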